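(* Let $\beta>1$ and $U(x)=(|x|^2)^\beta$ on $\mathbb{R}^n$. Then for all $x,y\in\mathbb{R}^n$, $$\langle\nabla U(x)-\nabla U(y),x-y\rangle\ge 2\beta\,2^{3-3\beta}\,|x-y|^{2\beta}.$$ If $n=1$, the better bound $\langle\nabla U(x)-\nabla U(y),x-y\rangle\ge 2\beta\,2^{2-2\beta}|x-y|^{2\beta}$ holds. *)

(* Defs.v *)
From HB Require Import structures.
From mathcomp Require Import all_boot all_order all_algebra.
From mathcomp Require Import all_classical all_reals all_analysis.
Set Implicit Arguments. Unset Strict Implicit. Unset Printing Implicit Defensive.
Import Order.TTheory GRing.Theory Num.Theory.
Import numFieldNormedType.Exports.
Local Open Scope ring_scope.

Definition dotv (R : realType) (n : nat) (x y : 'rV[R]_n) : R :=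
  \sum_(i < n) x 0 i * y 0 i.

Definition sqnorm (R : realType) (n : nat) (x : 'rV[R]_n) : R := dotv x x.

Definition Upot (R : realType) (n : nat) (beta : R) (x : 'rV[R]_n) : R :=
  powR (sqnorm x) beta.

Definition basisv (R : realType) (n : nat) (i : 'I_n) : 'rV[R]_n :=
  delta_mx 0 i.

Definition grad (R : realType) (n : nat) (f : 'rV[R]_n -> R) (x : 'rV[R]_n)
  : 'rV[R]_n :=
  \row_(i < n) ('D_(basisv R i) f x).

(* Main.v *)
Require Import Defs.
From HB Require Import structures.
From mathcomp Require Import all_boot all_order all_algebra.
From mathcomp Require Import all_classical all_reals all_analysis.
From mathcomp Require Import ring lra.
Import Order.TTheory GRing.Theory Num.Theory.
Import numFieldNormedType.Exports.
Local Open Scope ring_scope.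

Section S.
Variable R : realType.
Implicit Types r t u v g d : R.

Lemma convp {r t u v} : 1 <= r -> 0 <= t -> t <= 1 -> 0 <= u -> 0 <= v ->
  powR (t*u + (1-t)*v) r <= t * powR u r + (1-t) * powR v r.
Proof.
move=> r1 t0 t1 u0 v0.
have := @convex_powR R r r1 (@Itv01 _ _ t0 t1) u v.
rewrite !inE /= !in_itv /= !andbT => /(_ u0 v0).
by rewrite !convRE /=.
Qed.

Lemma superp {r g d} : 1 <= r -> 0 <= g -> 0 <= d ->
  powR g r + powR d r <= powR (g + d) r.
Proof.
move=> r1 g0 d0.
have r0 : r != 0 by rewrite gt_eqF // (lt_le_trans _ r1).
have [gd0|gdp] := eqVneq (g + d) 0.
  have /andP[/eqP g00 _] : (g == 0) && (d == 0) by rewrite -(paddr_eq0 g0 d0) gd0.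
  have d00 : d = 0 by move: gd0; rewrite g00 add0r.
  by rewrite g00 d00 addr0 powR0 // addr0.
have gdpos : 0 < g + d by rewrite lt_neqAle eq_sym gdp addr_ge0.
have key : forall w, 0 <= w -> w <= g + d -> powR w r <= w / (g + d) * powR (g + d) r.
  move=> w w0 wle.
  have t0 : 0 <= w / (g + d) by rewrite divr_ge0 // ltW.
  have t1 : w / (g + d) <= 1 by rewrite ler_pdivrMr // mul1r.
  have := convp r1 t0 t1 (ltW gdpos) (lexx (0:R)).
  rewrite mulr0 addr0 powR0 // mulr0 addr0 divfK //.
have h2 := key g g0 ltac:(by rewrite lerDl).
have h1 := key d d0 ltac:(by rewrite lerDr).
apply: le_trans (lerD h2 h1) _.
by rewrite -mulrDl -mulrDl divff // mul1r.
Qed.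

Lemma midp {r g d} : 1 <= r -> 0 <= g -> 0 <= d ->
  powR 2 (1 - r) * powR (g + d) r <= powR g r + powR d r.
Proof.
move=> r1 g0 d0.
have t0 : 0 <= (2:R)^-1 by rewrite invr_ge0.
have t1 : (2:R)^-1 <= 1 by rewrite invf_le1 // ler1n.
have := convp r1 t0 t1 g0 d0.
have -> : 1 - (2:R)^-1 = 2^-1 by field.
rewrite -mulrDr -mulrDr powRM // ?addr_ge0 //.
have h2 : powR (2:R)^-1 r = (powR 2 r)^-1.
  have : powR 2 r * powR (2:R)^-1 r = 1.
    by rewrite -powRM // ?invr_ge0 // divff // powR1.
  have hp : powR (2:R) r != 0 by rewrite gt_eqF // powR_gt0.
  move=> e; apply: (mulfI hp); rewrite e divff //.
have hc : powR 2 (1 - r) = 2 * (powR 2 r)^-1.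
  by rewrite powRD ?pnatr_eq0 ?implybT // powRr1 // powRN.
rewrite hc h2 => h.
have : 2 * ((powR 2 r)^-1 * powR (g + d) r) <= 2 * (2^-1 * (powR g r + powR d r)).
  by rewrite ler_pM2l.
by rewrite mulrA mulrA divff // mul1r.
Qed.


Lemma powsq (w be : R) : 1 < be -> powR (w^+2) be = `|w| * powR `|w| (2*be - 1).
Proof.
move=> b1.
have -> : w ^+ 2 = powR `|w| (2%:R : R) by rewrite powR_mulrn // -normrX ger0_norm // sqr_ge0.
rewrite -powRrM mulr_powRB1 //.
by rewrite mulr_gt0 // (lt_trans _ b1).
Qed.

Lemma powsq1 (w be : R) : 1 < be -> `|w| * powR (w^+2) (be - 1) = powR `|w| (2*be - 1).
Proof.
move=> b1.
have -> : w ^+ 2 = powR `|w| (2%:R : R) by rewrite powR_mulrn // -normrX ger0_norm // sqr_ge0.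
rewrite -powRrM.
have -> : 2%:R * (be - 1) = (2 * be - 1) - 1 by rewrite -[2%:R]/(2:R); ring.
rewrite mulr_powRB1 //.
have : 1 < 2 * be by rewrite (lt_le_trans b1) // ler_peMl // ?ler1n // ltW // (lt_trans _ b1).
by rewrite subr_gt0.
Qed.

Lemma scalar (be al ga s : R) : 1 < be -> 0 <= al -> 0 <= ga -> `|s| <= al * ga ->
  powR 2 (2 - 2*be) * powR (al^+2 + ga^+2 - 2*s) be <=
  powR (al^+2) (be-1) * (al^+2 - s) + powR (ga^+2) (be-1) * (ga^+2 - s).
Proof.
move=> b1 al0 ga0 hs.
set r := 2 * be - 1.
have r1 : 1 <= r by rewrite /r; lra.
set c := powR 2 (2 - 2*be).
have c0 : 0 <= c by apply: powR_ge0.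
have c1 : c <= 1.
  rewrite /c.
  have h2 : (1:R) <= 2 by rewrite ler1n.
  have h3 : 2 - 2 * be <= 0 by lra.
  by have := ler_powR h2 h3; rewrite powRr0.
have ec : c = powR 2 (1 - r) by rewrite /c /r; congr powR; ring.
set Ma := powR (al^+2) (be-1); set Mg := powR (ga^+2) (be-1).
have hPa : al * Ma = powR al r by have := powsq1 al be b1; rewrite ger0_norm.
have hPg : ga * Mg = powR ga r by have := powsq1 ga be b1; rewrite ger0_norm.
have [l [l0 [l1 sl]]] : exists l : R, 0 <= l /\ l <= 1 /\ s = (2 * l - 1) * (al * ga).
  have [z|nz] := eqVneq (al * ga) 0.
    exists 2^-1; split; first by rewrite invr_ge0.
    split; first by rewrite invf_le1 // ler1n.
    by rewrite z mulr0; apply/eqP; rewrite -normr_le0 -z.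
  have agp : 0 < al * ga by rewrite lt_neqAle eq_sym nz mulr_ge0.
  exists ((s / (al * ga) + 1) / 2).
  have : -1 <= s / (al * ga) <= 1.
    rewrite ler_pdivrMr // ler_pdivlMr // mul1r mulN1r -ler_norml //.
  move=> /andP[h1 h2]; split.
    by rewrite divr_ge0 //; lra.
  split; first by rewrite ler_pdivrMr //; lra.
  by field; move: nz; rewrite mulf_eq0 negb_or andbC.
have eD : al^+2 + ga^+2 - 2*s = l * (al - ga)^+2 + (1 - l) * (al + ga)^+2.
  by rewrite sl; ring.
rewrite eD.
have hconv := convp (ltW b1) l0 l1 (sqr_ge0 (al - ga)) (sqr_ge0 (al + ga)).
rewrite !powsq // in hconv.
have E1 : c * (`|al - ga| * powR `|al - ga| r) <= (powR al r - powR ga r) * (al - ga).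
  have [age|agl] := leP ga al.
    have d0 : 0 <= al - ga by rewrite subr_ge0.
    rewrite ger0_norm //.
    have := superp r1 ga0 d0; rewrite [ga + _]addrC subrK => hs2.
    apply: le_trans (_ : 1 * ((al - ga) * powR (al - ga) r) <= _).
      by apply: ler_wpM2r => //; rewrite mulr_ge0 // powR_ge0.
    rewrite mul1r mulrC; apply: ler_wpM2r => //; lra.
  have d0 : 0 <= ga - al by rewrite subr_ge0 ltW.
  rewrite ler0_norm ?opprB; last by rewrite subr_le0 ltW.
  have := superp r1 al0 d0; rewrite [al + _]addrC subrK => hs2.
  apply: le_trans (_ : 1 * ((ga - al) * powR (ga - al) r) <= _).
    by apply: ler_wpM2r => //; rewrite mulr_ge0 // powR_ge0.
  have -> : (powR al r - powR ga r) * (al - ga) = (powR ga r - powR al r) * (ga - al) by ring.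
  rewrite mul1r mulrC; apply: ler_wpM2r => //; lra.
have E2 : c * (`|al + ga| * powR `|al + ga| r) <= (powR al r + powR ga r) * (al + ga).
  rewrite ger0_norm ?addr_ge0 // mulrCA mulrC ler_wpM2r ?addr_ge0 //.
  by rewrite ec; apply: midp.
apply: le_trans (ler_wpM2l c0 hconv) _.
rewrite -/r mulrDr !mulrA ![c * l]mulrC ![c * (1 - l)]mulrC -!mulrA.
apply: le_trans (lerD (ler_wpM2l l0 E1) (ler_wpM2l _ E2)) _; first lra.
rewrite -hPa -hPg sl le_eqVlt; apply/orP; left; apply/eqP; ring.
Qed.

End S.

Section V.
Variables (R : realType) (n : nat).
Implicit Types x y z : 'rV[R]_n.

Lemma dotvC x y : dotv x y = dotv y x.
Proof. by apply: eq_bigr => i _; rewrite mulrC. Qed.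

Lemma dotvDl x y z : dotv (x + y) z = dotv x z + dotv y z.
Proof. by rewrite /dotv -big_split; apply: eq_bigr => i _; rewrite !mxE mulrDl. Qed.

Lemma dotvNl x z : dotv (- x) z = - dotv x z.
Proof. by rewrite /dotv -sumrN; apply: eq_bigr => i _; rewrite !mxE mulNr. Qed.

Lemma dotvZl k x z : dotv (k *: x) z = k * dotv x z.
Proof. by rewrite /dotv mulr_sumr; apply: eq_bigr => i _; rewrite !mxE mulrA. Qed.

Lemma dotvBl x y z : dotv (x - y) z = dotv x z - dotv y z.
Proof. by rewrite dotvDl dotvNl. Qed.

Lemma dotvBr x y z : dotv z (x - y) = dotv z x - dotv z y.
Proof. by rewrite dotvC dotvBl !(dotvC z). Qed.

Lemma sqnorm_ge0 x : 0 <= sqnorm x.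
Proof. by apply: sumr_ge0 => i _; rewrite -expr2 sqr_ge0. Qed.

Lemma sqnormB x y : sqnorm (x - y) = sqnorm x + sqnorm y - 2 * dotv x y.
Proof. rewrite /sqnorm dotvBl !dotvBr (dotvC y x); ring. Qed.

Lemma sqnorm0P x : sqnorm x = 0 -> forall i, x 0 i = 0.
Proof.
move=> h i.
have hp : forall j : 'I_n, true -> 0 <= x 0 j * x 0 j by move=> j _; rewrite -expr2 sqr_ge0.
have := @psumr_eq0P _ _ _ _ hp h i isT.
by move/eqP; rewrite -expr2 sqrf_eq0 => /eqP.
Qed.

Lemma dotvDr x y z : dotv z (x + y) = dotv z x + dotv z y.
Proof. by rewrite dotvC dotvDl !(dotvC z). Qed.

Lemma dotvZr k x z : dotv z (k *: x) = k * dotv z x.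
Proof. by rewrite dotvC dotvZl (dotvC z). Qed.

Lemma dot_basis i x : dotv (basisv R i) x = x 0 i.
Proof.
rewrite /dotv /basisv (bigD1 i) //= !mxE !eqxx /= mul1r big1 ?addr0 //.
by move=> j /negbTE ji; rewrite mxE ji andbF mul0r.
Qed.

Lemma sqnorm_line i x h :
  sqnorm (h *: basisv R i + x) = sqnorm x + h * (2 * x 0 i + h).
Proof.
rewrite /sqnorm dotvDl !dotvDr !dotvZl !dotvZr !dot_basis (dotvC x) dot_basis.
rewrite /basisv mxE !eqxx /=; ring.
Qed.

Lemma CS2 x y : dotv x y ^+ 2 <= sqnorm x * sqnorm y.
Proof.
have [b0|bp] := eqVneq (sqnorm y) 0.
  have y0 := sqnorm0P y b0.
  rewrite b0 mulr0 /dotv big1 ?expr0n // => i _; by rewrite y0 mulr0.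
have bpos : 0 < sqnorm y by rewrite lt_neqAle eq_sym bp sqnorm_ge0.
have := sqnorm_ge0 (sqnorm y *: x - dotv x y *: y).
rewrite sqnormB /sqnorm !dotvZl !dotvZr.
set a := dotv x x; set b := dotv y y; set c := dotv x y.
have -> : b * (b * a) + c * (c * b) - 2 * (b * (c * c)) = b * (a * b - c ^+ 2) by ring.
by rewrite pmulr_rge0 // subr_ge0.
Qed.

Lemma CS x y : `|dotv x y| <= Num.sqrt (sqnorm x) * Num.sqrt (sqnorm y).
Proof.
rewrite -sqrtrM ?sqnorm_ge0 // -sqrtr_sqr ler_sqrt ?mulr_ge0 ?sqnorm_ge0 //.
exact: CS2.
Qed.

Lemma DU_line be i x :
  'D_(basisv R i) (Upot be) x =
  'D_1 (fun h : R => powR (sqnorm x + h * (2 * x 0 i + h)) be) 0.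
Proof.
rewrite /derive; f_equal; f_equal; apply: funext => h /=.
by rewrite /Upot sqnorm_line !addr0 mul0r addr0 [_%:A]mulr1.
Qed.

End V.

Lemma DG (R : realType) (be S c : R) : 1 < be -> 0 <= S -> (S = 0 -> c = 0) ->
  'D_1 (fun h : R => powR (S + h * (c + h)) be) 0 = be * powR S (be - 1) * c.
Proof.
move=> b1 S0 Sc.
have [Sz|Snz] := eqVneq S 0.
  rewrite (Sc Sz) Sz mulr0.
  rewrite /derive; apply: cvg_lim => //.
  apply/cvgr0Pnorm_le => e e0.
  have m0 : 0 < Num.min e 1 by rewrite lt_min e0 ltr01.
  near=> h.
  have hneq : h != 0 by near: h; exact: nbhs_dnbhs_neq.
  have hle : `|h| <= Num.min e 1 by near: h; exact: dnbhs0_le.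
  rewrite /= !add0r !addr0 [_%:A]mulr1 mul0r powR0 ?subr0; last by rewrite gt_eqF // (lt_trans _ b1).
  move: hle; rewrite le_min => /andP[he h1].
  have ah : 0 < `|h| by rewrite normr_gt0.
  have eh : h * h = `|h| * `|h| by rewrite -normrM ger0_norm // -expr2 sqr_ge0.
  rewrite normrZ normfV (ger0_norm (powR_ge0 _ _)) eh.
  have hp : 0 < `|h| * `|h| by rewrite mulr_gt0.
  have hp1 : `|h| * `|h| <= 1 by rewrite mulr_ile1 // ltW.
  have := ge1r_powR (r := be) (a := `|h| * `|h|).
  rewrite hp hp1 => /(_ isT (ltW b1)) hP.
  apply: le_trans (ler_wpM2l _ hP) _; first by rewrite invr_ge0 ltW.
  by rewrite mulrA mulVf ?mul1r // gt_eqF.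
Unshelve. all: end_near.
have Sp : 0 < S by rewrite lt_neqAle eq_sym Snz.
have dg : is_derive (0:R) 1 (cst S + @id R * (cst c + @id R)) c.
  apply: is_derive_eq; rewrite /= scale0r !add0r; change ((c + 0)%:A = c); by rewrite addr0 [_%:A]mulr1.
have df : is_derive (S + 0 * (c + 0)) 1 (@powR R ^~ be) (be * powR (S + 0 * (c + 0)) (be - 1)).
  by apply: is_derive1_powR; rewrite mul0r addr0.
have := @derive_val _ _ _ _ _ _ _ (is_derive1_comp (g := cst S + @id R * (cst c + @id R)) df dg).
rewrite mul0r addr0 => <-.
by [].
Qed.


Lemma gradU (R : realType) (n : nat) (be : R) (x : 'rV[R]_n) : 1 < be ->
  grad (Upot be) x = (2 * be * powR (sqnorm x) (be - 1)) *: x.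
Proof.
move=> b1; apply/rowP => i; rewrite !mxE DU_line DG //.
- by ring.
- exact: sqnorm_ge0.
- by move=> S0; rewrite (@sqnorm0P R n x S0) mulr0.
Qed.

Lemma mainineq (R : realType) (n : nat) (be : R) (x y : 'rV[R]_n) : 1 < be ->
  2 * be * powR 2 (2 - 2 * be) * powR (sqnorm (x - y)) be <=
  dotv (grad (Upot be) x - grad (Upot be) y) (x - y).
Proof.
move=> b1.
rewrite !gradU // dotvBl !dotvZl !dotvBr sqnormB (@dotvC R n y x).
have := @scalar R be (Num.sqrt (sqnorm x)) (Num.sqrt (sqnorm y)) (dotv x y) b1
  (sqrtr_ge0 _) (sqrtr_ge0 _) (@CS R n x y).
rewrite !sqr_sqrtr ?sqnorm_ge0 // => H.
have b0 : 0 <= 2 * be by rewrite mulr_ge0 // ltW // (lt_trans _ b1).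
rewrite -mulrA; apply: le_trans (ler_wpM2l b0 H) _.
rewrite le_eqVlt; apply/orP; left; apply/eqP; rewrite /sqnorm; ring.
Qed.

Theorem proposition5p4 (R : realType) (n : nat) (beta : R) (hbeta : 1 < beta) :
  (forall x y : 'rV[R]_n,
     dotv (grad (Upot beta) x - grad (Upot beta) y) (x - y)
       >= 2 * beta * powR 2 (3 - 3 * beta) * powR (sqnorm (x - y)) beta)
  /\
  (n = 1%N ->
   forall x y : 'rV[R]_n,
     dotv (grad (Upot beta) x - grad (Upot beta) y) (x - y)
       >= 2 * beta * powR 2 (2 - 2 * beta) * powR (sqnorm (x - y)) beta).
Proof.
split; last by move=> _ x y; exact: mainineq.
move=> x y; apply: le_trans (@mainineq R n beta x y hbeta).
have b0 : 0 <= 2 * beta by rewrite mulr_ge0 // ltW // (lt_trans _ hbeta).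
apply: ler_wpM2r; first exact: powR_ge0.
apply: ler_wpM2l => //.
have h2 : (1:R) <= 2 by rewrite ler1n.
have h3 : 3 - 3 * beta <= 2 - 2 * beta by lra.
exact: (ler_powR h2 h3).
Qed.
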